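(* Let $q\ge3$, $G\in\mathbb G^q$, and let $C$ be the core of $S=\Psi(G)$. Suppose every white vertex of $C$ either has valency strictly smaller than $q$ in $C$, or is incident in $C$ to a core-chain containing at least one internal white vertex. Then $G$ is an SYK graph.
   Context: Fix an integer $q\ge 2$. A $(q+1)$-edge-colored graph (colored graph) is a finite connected graph, multiple edges allowed and no loops, whose edges carry colors in $\{0,1,\dots,q\}$ such that every vertex is incident to exactly one edge of each color. It is rooted if one color-0 edge is distinguished and oriented; it is bipartite if its vertices can be colored black and white so that every edge joins a black and a white vertex, with the convention that the origin of the root edge is black. $\mathbb G^q$ denotes the set of rooted bipartite colored graphs. $G_{\hat 0}$ denotes the graph obtained from $G$ by deleting all color-0 edges; $G$ is an SYK graph if $G_{\hat 0}$ is connected. Constellations: given $G\in\mathbb G^q$, its constellation $S=\Psi(G)$ is obtained as follows: orient every edge from its black to its white endpoint; contract every color-0 edge into a single vertex, called a white vertex of $S$ (the one coming from the root edge is the root vertex). For each $i\in\{1,\dots,q\}$ the color-$i$ edges now form directed cycles; for each such cycle, passing through white vertices $w_1,\dots,w_p$ in this cyclic order, add a new vertex of color $i$ joined by one color-$i$ edge to each $w_k$, equip the new vertex with the cyclic order $(w_1,\dots,w_p)$ of its incident edges, and delete the original color-$i$ edges of the cycle. Core: the core $C$ of $S$ is obtained by repeatedly deleting a vertex of degree $1$ other than the root vertex, together with its incident edge, until every non-root vertex has degree at least 2. A chain-vertex of $C$ is a non-root vertex of degree $2$ in $C$; a core-chain is a path of $C$ (possibly closed) whose internal vertices are chain-vertices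 and whose extremities are not chain-vertices. *)

(* Defs.v *)
From mathcomp Require Import all_boot all_order all_fingroup.
Set Implicit Arguments. Unset Strict Implicit. Unset Printing Implicit Defensive.

(* A rooted bipartite (q+1)-edge-colored graph G is encoded by
   - black vertices 'I_n and white vertices 'I_n,
   - for each color c : 'I_q.+1 a permutation sigma c : the color-c edge at the
     black vertex b joins b to the white vertex sigma c b (each color class is a
     perfect matching between black and white vertices; multi-edges allowed),
   - a root black vertex r : 'I_n (the root edge is the color-0 edge at r,
     oriented from its black endpoint r to the white vertex sigma 0 r). *)

Section Defs.
Variables (q n : nat).
Implicit Types (sigma : 'I_q.+1 -> {perm 'I_n}).

(* vertices of G : inl b = black b, inr w = white w *)
Definition Gvtx := ('I_n + 'I_n)%type.

Definition Gadj (P : pred 'I_q.+1) sigma : rel Gvtx :=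
  fun u v => match u, v with
  | inl b, inr w => [exists c, P c && (sigma c b == w)]
  | inr w, inl b => [exists c, P c && (sigma c b == w)]
  | _, _ => false
  end.

Definition Gconnected sigma : Prop :=
  forall u v : Gvtx, connect (Gadj predT sigma) u v.

Definition SYK sigma : Prop :=
  forall u v : Gvtx, connect (Gadj (fun c => c != ord0) sigma) u v.

(* White vertex of S = color-0 edge, indexed by its black endpoint b.
   For i : 'I_q (standing for color i+1), the color-(i+1) edge leaving the
   contracted vertex b reaches white sigma_{i+1} b, which belongs to the
   color-0 edge with black endpoint sigma_0^{-1}(sigma_{i+1} b). *)
Definition tau sigma (i : 'I_q) : {perm 'I_n} :=
  (sigma (lift ord0 i) * (sigma ord0)^-1)%g.

(* vertices of S : inl b = white vertex b;
   inr (i, A) = the vertex of color i+1 attached to the cycle A of tau i *)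
Definition Svtx := ('I_n + ('I_q * {set 'I_n}))%type.

Definition Svertices sigma : {set Svtx} :=
  [set v : Svtx | match v with
                  | inl _ => true
                  | inr (i, A) => [exists b, A == porbit (tau sigma i) b]
                  end].

Definition Sadj : rel Svtx :=
  fun u v => match u, v with
  | inl b, inr (_, A) => b \in A
  | inr (_, A), inl b => b \in A
  | _, _ => false
  end.

Definition Sroot (r : 'I_n) : Svtx := inl r.

Definition deg (X : {set Svtx}) (v : Svtx) : nat := #|[set u in X | Sadj v u]|.

Definition prune_step (r : 'I_n) (X Y : {set Svtx}) : Prop :=
  exists2 v, v \in X & [/\ v != Sroot r, deg X v = 1 & Y = X :\ v].

Inductive prunes (r : 'I_n) : {set Svtx} -> {set Svtx} -> Prop :=
  | prunes_refl X : prunes r X X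
  | prunes_step X Y Z : prune_step r X Y -> prunes r Y Z -> prunes r X Z.

Definition is_core sigma (r : 'I_n) (C : {set Svtx}) : Prop :=
  prunes r (Svertices sigma) C /\
  (forall v, v \in C -> v != Sroot r -> 2 <= deg C v).

Definition chain_vertex (r : 'I_n) (C : {set Svtx}) (v : Svtx) : bool :=
  [&& v \in C, v != Sroot r & deg C v == 2].

(* internal vertices of the path x :: p *)
Definition internal (p : seq Svtx) : seq Svtx := take (size p).-1 p.

(* x :: p is a core-chain of C: a (simple, possibly closed) path of C with at
   least one edge, whose internal vertices are chain-vertices and whose
   extremities x and last x p are not chain-vertices *)
Definition core_chain (r : 'I_n) (C : {set Svtx}) (x : Svtx) (p : seq Svtx) : Prop :=
  [/\ 0 < size p, path Sadj x p, all (fun v => v \in C) (x :: p)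
    & [/\ uniq (belast x p) && uniq p, (last x p == x) ==> (2 < size p),
           all (chain_vertex r C) (internal p)
         & ~~ chain_vertex r C x && ~~ chain_vertex r C (last x p)]].

Definition is_white (v : Svtx) : bool := if v is inl _ then true else false.

End Defs.

Arguments is_white {q n} v.
Arguments Sroot {q n} r.
Arguments Sadj {q n}.

(* Main.v *)
Require Import Defs.
From mathcomp Require Import all_boot all_order all_fingroup.
Set Implicit Arguments. Unset Strict Implicit. Unset Printing Implicit Defensive.

Lemma Gadj_sym q n (P : pred 'I_q.+1) (sigma : 'I_q.+1 -> {perm 'I_n}) :
  symmetric (Gadj P sigma).
Proof. by move=> [x|x] [y|y]. Qed.

Lemma Sadj_sym q n : symmetric (@Sadj q n).
Proof. by move=> [x|[i A]] [y|[j B]]. Qed.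

Lemma prunes_sub q n (r : 'I_n) (X Y : {set Svtx q n}) :
  prunes r X Y -> Y \subset X.
Proof.
elim=> [Z|X1 Y1 Z [v vX [_ _ ->]] _ IH]; first exact: subxx.
by apply: subset_trans IH _; apply: subsetDl.
Qed.

Lemma prunes_keep q n (r : 'I_n) (H X Y : {set Svtx q n}) :
  (forall v, v \in H -> 2 <= #|[set u in H | Sadj v u]|) ->
  prunes r X Y -> H \subset X -> H \subset Y.
Proof.
move=> Hdeg; elim=> // X1 Y1 Z [v vX [_ dv ->]] _ IH HX; apply: IH.
apply/subsetP=> x xH; rewrite in_setD1 (subsetP HX) // andbT.
apply/eqP=> exv; subst x.
have := Hdeg _ xH; rewrite -/(deg X1 v) in dv.
suff: #|[set u in H | Sadj v u]| <= deg X1 v by rewrite dv => le1 /leq_trans/(_ le1).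
apply: subset_leq_card; apply/subsetP=> u; rewrite !inE => /andP[uH ->].
by rewrite (subsetP HX).
Qed.
Definition Kf q n (sigma : 'I_q.+1 -> {perm 'I_n}) (v0 u : Gvtx n) : bool :=
  connect (Gadj (fun c => c != ord0) sigma) u v0.

Definition mixed q n (sigma : 'I_q.+1 -> {perm 'I_n}) v0 (b : 'I_n) : bool :=
  Kf sigma v0 (inl b) != Kf sigma v0 (inr (sigma ord0 b)).

Lemma K_edge q n (sigma : 'I_q.+1 -> {perm 'I_n}) v0 x y :
  Gadj (fun c => c != ord0) sigma x y -> Kf sigma v0 x = Kf sigma v0 y.
Proof.
move=> exy; rewrite /Kf; apply: same_connect1 exy v0.
exact: sym_connect_sym (@Gadj_sym _ _ _ _).
Qed.

Lemma K_tau q n (sigma : 'I_q.+1 -> {perm 'I_n}) v0 i b :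
  Kf sigma v0 (inr (sigma ord0 (tau sigma i b))) = Kf sigma v0 (inl b).
Proof.
rewrite /tau permM permKV; symmetry; apply: K_edge => /=.
by apply/existsP; exists (lift ord0 i); rewrite eq_sym neq_lift eqxx.
Qed.

Lemma two_mixed q n (sigma : 'I_q.+1 -> {perm 'I_n}) v0 i b0 :
  mixed sigma v0 b0 ->
  exists b1, [/\ b1 \in porbit (tau sigma i) b0, b1 != b0 & mixed sigma v0 b1].
Proof.
move=> mb0; set t := tau sigma i; set om := fun b => Kf sigma v0 (inr (sigma ord0 b)).
case: (boolP [exists b1, [&& b1 \in porbit t b0, b1 != b0 & mixed sigma v0 b1]]).
  by case/existsP=> b1 /and3P[h1 h2 h3]; exists b1.
move/existsPn=> nomix; exfalso; move: mb0.
have nm b : b \in porbit t b0 -> b != b0 -> om (t b) = om b.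
  move=> bA bn; rewrite /om K_tau; apply/eqP; move: (nomix b).
  by rewrite bA bn /mixed /= negbK eq_sym.
pose y k := ((t ^+ k.+1)%g : {perm _}) b0.
have yS k : y k.+1 = t (y k) by rewrite /y expgSr permM.
have Hk k : (forall j, j < k -> y j != b0) -> om (y k) = om (y 0).
  elim: k => // k IH H; rewrite yS nm ?IH //.
  - by move=> j jk; apply: H; apply: ltnW.
  - exact: mem_porbit.
  - exact: H.
have ex : exists k, y k == b0.
  exists (#[t]%g).-1; rewrite /y prednK ?order_gt0 // expg_order perm1 //.
case: (ex_minnP ex) => m /eqP ym mmin.
have := Hk m; rewrite ym => /(_ _) H.
have {}H : om b0 = om (y 0).
  apply: H => j jm; apply/negP => /mmin; rewrite leqNgt jm //.
move: H; rewrite /y expg1 /om K_tau => H.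
by rewrite /mixed; move: H; rewrite /om => ->; rewrite eqxx.
Qed.

Definition Hset q n (sigma : 'I_q.+1 -> {perm 'I_n}) v0 : {set Svtx q n} :=
  [set v : Svtx q n | match v with
    | inl b => mixed sigma v0 b
    | inr (i, A) => [exists b, (A == porbit (tau sigma i) b) && mixed sigma v0 b]
    end].

Lemma white_deg q n (sigma : 'I_q.+1 -> {perm 'I_n}) v0 (X : {set Svtx q n}) b :
  mixed sigma v0 b -> Hset sigma v0 \subset X ->
  q <= #|[set u in X | Sadj (inl b : Svtx q n) u]|.
Proof.
move=> mb HX.
pose f := fun i : 'I_q => (inr (i, porbit (tau sigma i) b) : Svtx q n).
have finj : injective f by move=> i j [].
have fq : #|f @: [set: 'I_q]| = q by rewrite card_imset // cardsT card_ord.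
rewrite -{1}fq; apply: subset_leq_card; apply/subsetP=> u /imsetP[i _ ->].
rewrite inE /= porbit_id andbT (subsetP HX) // inE.
by apply/existsP; exists b; rewrite eqxx.
Qed.

Lemma col_two q n (sigma : 'I_q.+1 -> {perm 'I_n}) v0 (X : {set Svtx q n}) i b :
  mixed sigma v0 b -> Hset sigma v0 \subset X ->
  exists b1, [/\ b1 != b, mixed sigma v0 b1 &
    [set (inl b : Svtx q n); inl b1] \subset
       [set u in X | Sadj (inr (i, porbit (tau sigma i) b) : Svtx q n) u]].
Proof.
move=> mb HX; have [b1 [b1A b1n mb1]] := two_mixed i mb.
exists b1; split=> //; apply/subsetP=> u; rewrite !inE => /orP[]/eqP->/=.
  by rewrite porbit_id andbT (subsetP HX) // inE.
by rewrite b1A andbT (subsetP HX) // inE.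
Qed.

Theorem mainTheorem10 (q n : nat) (sigma : 'I_q.+1 -> {perm 'I_n}) (r : 'I_n)
    (C : {set Svtx q n}) :
  3 <= q ->
  Gconnected sigma ->
  is_core sigma r C ->
  (forall w : 'I_n, (inl w : Svtx q n) \in C ->
     deg C (inl w : Svtx q n) < q \/
     exists (x : Svtx q n) (p : seq (Svtx q n)),
       [/\ core_chain r C x p, (x == inl w) || (last x p == inl w)
         & has (@is_white q n) (internal p)]) ->
  SYK sigma.
Proof.
move=> q3 Gc [prC coreC] hyp u0 v0.
apply: contraT => nc.
have [b mb] : exists b, mixed sigma v0 b.
  case: (pickP (mixed sigma v0)) => [b mb|nom]; first by exists b.
  exfalso; pose a := [pred u | Kf sigma v0 u].
  have cl : closed (Gadj predT sigma) a.
    have key x c : Kf sigma v0 (inl x) = Kf sigma v0 (inr (sigma c x)).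
      case: (eqVneq c ord0) => [->|cn].
        by move: (nom x); rewrite /mixed => /negbFE/eqP.
      by apply: K_edge => /=; apply/existsP; exists c; rewrite cn eqxx.
    move=> [x|x] [y|y] //= /existsP[c]; rewrite /= => /eqP <-; rewrite !inE /=.
      exact: key.
    exact: (esym (key _ _)).
  have := closed_connect cl (Gc u0 v0).
  by rewrite !inE /Kf connect0 (negbTE nc).
set M := mixed sigma v0.
set H := Hset sigma v0.
have CS : C \subset Svertices sigma by apply: prunes_sub prC.
have HS : H \subset Svertices sigma.
  apply/subsetP=> -[x|[i A]]; rewrite !inE //= => /existsP[b' /andP[eA _]].
  by apply/existsP; exists b'.
have Hdeg : forall v, v \in H -> 2 <= #|[set u in H | Sadj v u]|.
  move=> [x|[i A]]; rewrite inE /=.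
    move=> mx; apply: leq_trans (white_deg mx (subxx _)); exact: ltnW.
  case/existsP=> b' /andP[/eqP -> mb'].
  have [b1 [b1n _ sub]] := col_two i mb' (subxx H).
  apply: leq_trans (subset_leq_card sub).
  by rewrite cards2 eq_sym (inj_eq (@inl_inj _ _)) b1n.
have HC : H \subset C by apply: prunes_keep Hdeg prC HS.
have chainL : forall b s, M b -> path Sadj (inl b : Svtx q n) s ->
    all (chain_vertex r C) s -> ~~ has (@is_white q n) s.
  move=> b' [|[c|[i A]] s] //= mb' /andP[bA ps] /andP[chc alls].
  case: s ps alls => [|d s] //= /andP[cd _] /andP[chd _].
  move: chc chd => /and3P[cC _ /eqP dc] /and3P[dC _ /eqP dd].
  have := subsetP CS _ cC; rewrite inE => /existsP[b2 /eqP eA].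
  have eA' : A = porbit (tau sigma i) b'.
    by apply/eqP; rewrite eA eq_sym eq_porbit_mem -eA.
  clear eA; subst A.
  have [b1 [b1n mb1 sub]] := col_two i mb' HC.
  have eqs : [set (inl b' : Svtx q n); inl b1] =
     [set u in C | Sadj (inr (i, porbit (tau sigma i) b') : Svtx q n) u].
    apply/eqP; rewrite eqEcard sub /= cards2.
    move: dc; rewrite /deg => ->.
    by rewrite eq_sym (inj_eq (@inl_inj _ _)) b1n.
  have : d \in [set u in C | Sadj (inr (i, porbit (tau sigma i) b') : Svtx q n) u].
    by rewrite inE dC.
  rewrite -eqs !inE => /orP[]/eqP ed; subst d.
    by have := white_deg mb' HC; move: dd; rewrite /deg => -> => /(leq_trans q3).
  by have := white_deg mb1 HC; move: dd; rewrite /deg => -> => /(leq_trans q3).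
have bC : (inl b : Svtx q n) \in C by rewrite (subsetP HC) // inE.
case: (hyp b bC) => [|[x [p [[p0 pth _ [_ _ allch _]] ends hw]]]].
  by rewrite ltnNge (white_deg mb HC).
case/lastP: p p0 pth allch ends hw => [//|p' z] _ pth allch ends hw.
have ip : internal (rcons p' z) = p'.
  by rewrite /internal size_rcons /= -cats1 take_size_cat.
rewrite ip in allch hw; suff: ~~ has (@is_white q n) p' by rewrite hw.
case/orP: ends => /eqP e.
  subst x; move: pth; rewrite rcons_path => /andP[pth _].
  exact: chainL mb pth allch.
rewrite last_rcons in e.
have : path (fun a c => Sadj c a) x (rcons p' z).
  by rewrite (eq_path (e' := Sadj)) // => a c; apply: Sadj_sym.
rewrite -rev_path last_rcons belast_rcons rev_cons rcons_path e => /andP[pr _].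
rewrite -has_rev; apply: chainL mb pr _; by rewrite all_rev.
Qed.
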